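(* Let $u$ be a positive harmonic function on $\mathbf D$ belonging to $\mathcal K$, and let $\mu$ be the finite positive Borel measure on $\mathbf T$ with $u(re^{i\theta})=\int P(re^{i(\theta-\phi)})\,d\mu(e^{i\phi})$, where $P(re^{i\theta})=\frac1{2\pi}\frac{1-r^2}{1-2r\cos\theta+r^2}$. Let $C$ be a constant such that $\mu(I)\le C|I|\log\frac e{|I|}$ for every arc $I\subset\mathbf T$. For $n\ge1$ let $F_n=\{\theta\in[0,2\pi):\ \limsup_{r\to1}\frac{u(re^{i\theta})}{|\log(1-r)|}\ge\frac2n\}$. Then there exists $k>0$ depending only on $C$ and $n$ such that for each $\theta\in F_n$ there exists a decreasing sequence $(\Delta_j)$ with $\Delta_j\to0$ satisfying $$\mu(\theta-\Delta_j,\theta+\Delta_j)\ge k\left(10\Delta_j\log\frac1{10\Delta_j}\right)\quad\text{for all }j.$$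
   Context: $\mathbf D$ is the open unit disc and $\mathbf T$ the unit circle; $|I|$ is arc length. $\mathcal K$ is the class of harmonic functions $u$ on $\mathbf D$ for which there is a constant $C'$ with $u(z)\le C'\log\frac{e}{1-|z|}$ on $\mathbf D$ (for positive $u\in\mathcal K$ the representing measure satisfies $\mu(I)\le C|I|\log\frac e{|I|}$ for some $C$). Notation: $\mu(\alpha,\beta)=\mu(\{e^{i\varphi}:\alpha\le\varphi<\beta\})$. *)

(* Defs.v *)
From HB Require Import structures.
From mathcomp Require Import all_boot all_order all_algebra.
From mathcomp Require Import all_classical all_reals all_analysis.
Set Implicit Arguments. Unset Strict Implicit. Unset Printing Implicit Defensive.
Import Order.TTheory GRing.Theory Num.Theory.
Import numFieldNormedType.Exports.
Local Open Scope classical_set_scope.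
Local Open Scope ring_scope.

(* The circle T is parametrized by the angle phi in [0, 2pi); a finite positive
   Borel measure on T is a Borel measure mu on R carried by [0, 2pi). *)
Definition circle_measure {R : realType}
  (mu : {measure set (measurableTypeR R) -> \bar R}) : Prop :=
  mu (~` `[0%R, (2 * pi)%R[%classic) = 0%E /\ (mu `[0%R, (2 * pi)%R[%classic < +oo)%E.

(* mu(a, b) = mu({e^{i phi} : a <= phi < b}) (angles taken mod 2pi). *)
Definition marc {R : realType} (mu : {measure set (measurableTypeR R) -> \bar R})
  (a b : R) : \bar R :=
  mu [set phi | phi \in `[0%R, (2 * pi)%R[%classic /\
                exists m : int, a <= phi + 2 * pi * m%:~R < b].

Definition poisson {R : realType} (r t : R) : R :=
  (1 - r ^+ 2) / (2 * pi * (1 - 2 * r * cos t + r ^+ 2)).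

Definition poisson_int {R : realType} (mu : {measure set (measurableTypeR R) -> \bar R})
  (r theta : R) : R :=
  fine (\int[mu]_(phi in `[0%R, (2 * pi)%R[%classic) (poisson r (theta - phi))%:E)%E.

Definition in_K {R : realType} (u : R -> R -> R) : Prop :=
  exists C' : R, forall r theta, 0 <= r < 1 ->
    u r theta <= C' * ln (expR 1 / (1 - r)).

Definition Fset {R : realType} (u : R -> R -> R) (n : nat) : set R :=
  [set theta | theta \in `[0%R, (2 * pi)%R[%classic /\
     ((2 / n%:R)%:E <= limf_esup (fun r => (u r theta / `|ln (1 - r)|)%:E)
                                  (at_left 1))%E].

(* Main.v *)
Require Import Defs.
From HB Require Import structures.
From mathcomp Require Import all_boot all_order all_algebra.
From mathcomp Require Import all_classical all_reals all_analysis.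
From mathcomp Require Import ring lra zify.
Import Order.TTheory GRing.Theory Num.Theory.
Import numFieldNormedType.Exports.
Local Open Scope classical_set_scope.
Local Open Scope ring_scope.

Lemma sin_lb (R : realType) : exists2 c0 : R, 0 < c0 &
  forall x, 0 <= x <= pi / 2 -> c0 * x <= sin x.
Proof.
have c1 : (0:R) < cos 1 := @cos1_gt0 R.
have s1 : (0:R) < sin 1 by apply: sin2_gt0; lra.
have hpi := @pihalf_ge1 R. have hpi2 := @pihalf_lt2 R.
exists (Num.min (cos 1) (sin 1 / 2)); first by rewrite lt_min c1 /=; lra.
move=> x /andP[x0 xpi].
have [x1|x1] := lerP x 1.
  have [->|xp] := eqVneq x 0; first by rewrite mulr0 sin0.
  have xp' : 0 < x by rewrite lt_neqAle eq_sym xp x0.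
  have [c cI E] := @MVT R sin cos 0 x xp' (fun y _ => is_derive_sin y)
     (continuous_subspaceT (fun y => @continuous_sin R y)).
  move: E; rewrite sin0 subr0 subr0 => ->.
  rewrite ler_pM2r // ge_min; apply/orP; left.
  move: cI; rewrite in_itv /= => /andP[c0 cx].
  rewrite le_eqVlt; apply/orP; right.
  rewrite ltr_cos ?in_itv /=; try (apply/andP; split); try lra.
have sx : sin 1 < sin x.
  rewrite ltr_sin // in_itv /=; apply/andP; split; lra.
have : sin 1 / 2 * x <= sin 1 by nra.
move=> H; apply: (le_trans (y := sin 1 / 2 * x)).
  rewrite ler_pM2r; last lra.
  by rewrite ge_min lexx orbT.
lra.
Qed.

Lemma poisson_ge0 (R : realType) (r t : R) : 0 <= r < 1 -> 0 <= poisson r t.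
Proof.
move=> /andP[r0 r1]; rewrite /poisson.
have hc := cos_le1 t. have pi0 := @pi_gt0 R.
apply: divr_ge0; first nra.
apply: mulr_ge0; first lra.
nra.
Qed.

Lemma poisson_ub (R : realType) : exists2 K0 : R, 0 < K0 &
  forall r t, 1/2 <= r < 1 -> `|t| <= pi ->
  poisson r t <= K0 * (1 - r) / ((1 - r) ^+ 2 + t ^+ 2).
Proof.
have [c0 c0p Hc0] := sin_lb R.
have pi0 := @pi_gt0 R.
have hpi := @pihalf_ge1 R.
have c01 : c0 <= 1.
  have := Hc0 1; rewrite mulr1 => H; apply: (le_trans (H _)); last exact: sin_le1.
  apply/andP; split; lra.
set c1 := c0 ^+ 2 / 2.
have c1p : 0 < c1 by rewrite /c1; apply: divr_gt0 => //; exact: exprn_gt0.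
have c11 : c1 <= 1 by rewrite /c1; nra.
exists (1 / (pi * c1)); first by apply: divr_gt0 => //; exact: mulr_gt0.
move=> r t /andP[r0 r1] tpi.
set s := sin (t / 2).
have Hs : c0 ^+ 2 * t ^+ 2 / 4 <= s ^+ 2.
  have e : s ^+ 2 = sin (`|t| / 2) ^+ 2.
    rewrite /s; have [t0|t0] := lerP 0 t; first by rewrite ger0_norm.
    by rewrite ltr0_norm // mulNr sinN sqrrN.
  rewrite e.
  have h1 := Hc0 (`|t| / 2).
  have tn := normr_ge0 t.
  have h2 : 0 <= `|t| / 2 <= pi / 2 by apply/andP; split; lra.
  have h3 := h1 h2.
  have h4 : 0 <= c0 * (`|t| / 2) by apply: mulr_ge0; lra.
  have h5 : (c0 * (`|t| / 2)) ^+ 2 <= sin (`|t| / 2) ^+ 2.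
    by rewrite ler_sqr // ?nnegrE //; lra.
  apply: le_trans h5; rewrite -(real_normK (num_real t)).
  have -> : c0 ^+ 2 * `|t| ^+ 2 / 4 = (c0 * (`|t| / 2)) ^+ 2 by field.
  by [].
have ec : cos t = 1 - 2 * s ^+ 2.
  rewrite /s -{1}[t](_ : (t / 2) *+ 2 = t); last by rewrite -mulr_natr; field.
  by rewrite cos_mulr2n cos2sin2; ring.
have Dlb : c1 * ((1 - r) ^+ 2 + t ^+ 2) <= 1 - 2 * r * cos t + r ^+ 2.
  rewrite ec /c1.
  have s0 : 0 <= s ^+ 2 by exact: sqr_ge0.
  have q1 : c0 ^+ 2 <= 1 by nra.
  have q2 : 2 * s ^+ 2 <= 4 * r * s ^+ 2 by nra.
  have q3 : 0 <= (1 - r) ^+ 2 by exact: sqr_ge0.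
  have q4 : c0 ^+ 2 / 2 * (1 - r) ^+ 2 <= (1 - r) ^+ 2 by nra.
  have e2 : 1 - 2 * r * (1 - 2 * s ^+ 2) + r ^+ 2 = (1 - r) ^+ 2 + 4 * r * s ^+ 2 by ring.
  rewrite e2 mulrDr. lra.
have Dp : 0 < c1 * ((1 - r) ^+ 2 + t ^+ 2).
  apply: mulr_gt0 => //; have : 0 < (1 - r) ^+ 2 by apply: exprn_gt0; lra.
  have := sqr_ge0 t; lra.
rewrite /poisson.
have -> : 1 / (pi * c1) * (1 - r) / ((1 - r) ^+ 2 + t ^+ 2) =
   (2 * (1 - r)) / (2 * pi * (c1 * ((1 - r) ^+ 2 + t ^+ 2))).
  have n1 : (1 - r) ^+ 2 + t ^+ 2 != 0.
    by apply: lt0r_neq0; have := Dp; rewrite pmulr_rgt0.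
  move: pi0 n1; generalize (@pi R) => p p0 n1.
  field; apply/and3P; split => //; exact: lt0r_neq0.
apply: ler_pM.
- nra.
- by rewrite invr_ge0; apply: mulr_ge0; lra.
- nra.
- rewrite lef_pV2 ?posrE; [|nra|apply: mulr_gt0; lra].
  by rewrite ler_pM2l //; apply: mulr_gt0; lra.
Qed.

Set Implicit Arguments. Unset Strict Implicit.

Definition Aset (R : realType) (th D : R) : set R :=
  `[0, 2 * pi[%classic `&` (`[th - D, th + D[%classic `|`
     `[th - D - 2 * pi, th + D - 2 * pi[%classic `|`
     `[th - D + 2 * pi, th + D + 2 * pi[%classic).

Lemma Aset_meas (R : realType) (th D : R) : measurable (Aset th D).
Proof.
by apply: measurableI; [|apply: measurableU; [apply: measurableU|]];
  exact: measurable_itv.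
Qed.

Lemma int_cases (R : realType) (m : int) :
  -2 < (m%:~R : R) < 2 -> m = 0 \/ m = 1 \/ m = -1.
Proof.
move=> /andP[h1 h2].
have a1 : ((-2)%:~R : R) < m%:~R by rewrite (_ : (-2)%:~R = -2 :> R) // intrN.
have a2 : (m%:~R : R) < 2%:~R by [].
rewrite ltr_int in a1; rewrite ltr_int in a2.
lia.
Qed.

Lemma Aset_marc (R : realType) (mu : {measure set (measurableTypeR R) -> \bar R})
  (th D : R) : 0 <= th < 2 * pi -> 0 < D <= pi ->
  marc mu (th - D) (th + D) = mu (Aset th D).
Proof.
move=> /andP[t0 t1] /andP[D0 D1]; rewrite /marc /Aset; congr (mu _).
have pi0 := @pi_gt0 R.
apply/seteqP; split => phi /=.
  rewrite in_setE /= in_itv /= => -[/andP[p0 p1] [m /andP[m1 m2]]].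
  have [em|[em|em]] : m = 0 \/ m = 1 \/ m = -1.
  - apply: (@int_cases R); apply/andP; split; nra.
  - rewrite em mulr0 addr0 in m1 m2.
    split; first by rewrite p0 p1.
    by left; left; rewrite in_itv /=; apply/andP.
  - rewrite em mulr1 in m1 m2.
    split; first by rewrite p0 p1.
    by left; right; rewrite in_itv /=; apply/andP; split; lra.
  - rewrite em mulrN1 in m1 m2.
    split; first by rewrite p0 p1.
    by right; rewrite in_itv /=; apply/andP; split; lra.
rewrite !in_itv /= => -[/andP[p0 p1] H].
split; first by rewrite in_setE /= in_itv /=; apply/andP.
case: H => [[]|] /andP[q1 q2].
- by exists 0; rewrite mulr0 addr0; apply/andP.
- by exists 1; rewrite mulr1; apply/andP; split; lra.
- by exists (-1); rewrite mulrN1; apply/andP; split; lra.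
Qed.

Lemma cos_red (R : realType) (th phi : R) : 0 <= th < 2 * pi -> 0 <= phi < 2 * pi ->
  exists t, `|t| <= pi /\ cos (th - phi) = cos t /\
    forall D, 0 < D -> `|t| < D -> Aset th D phi.
Proof.
move=> /andP[t0 t1] /andP[p0 p1].
have pi0 := @pi_gt0 R.
have c2 : forall x : R, cos (x + 2 * pi) = cos x.
  by move=> x; rewrite mulr_natl; exact: cosD2pi.
have [h1|h1] := ltrP pi (th - phi).
  exists (th - phi - 2 * pi); split; first by rewrite ler_norml; apply/andP; split; lra.
  split; first by rewrite -[in RHS]c2 subrK.
  move=> D D0; rewrite ltr_norml => /andP[q1 q2].
  rewrite /Aset /=; split; first by rewrite in_itv /= p0 p1.
  by left; right; rewrite in_itv /=; apply/andP; split; lra.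
have [h2|h2] := ltrP (th - phi) (- pi).
  exists (th - phi + 2 * pi); split; first by rewrite ler_norml; apply/andP; split; lra.
  split; first by rewrite c2.
  move=> D D0; rewrite ltr_norml => /andP[q1 q2].
  rewrite /Aset /=; split; first by rewrite in_itv /= p0 p1.
  by right; rewrite in_itv /=; apply/andP; split; lra.
exists (th - phi); split; first by rewrite ler_norml; apply/andP; split; lra.
split => // D D0; rewrite ltr_norml => /andP[q1 q2].
rewrite /Aset /=; split; first by rewrite in_itv /= p0 p1.
by left; left; rewrite in_itv /=; apply/andP; split; lra.
Qed.

Lemma pw_bound (R : realType) (K0 r th phi : R) (N : nat) :
  0 < K0 ->
  (forall r t, 1/2 <= r < 1 -> `|t| <= pi ->
     poisson r t <= K0 * (1 - r) / ((1 - r) ^+ 2 + t ^+ 2)) ->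
  1/2 <= r < 1 -> 4 <= 2 ^+ N * (1 - r) -> 0 <= th < 2 * pi -> 0 <= phi < 2 * pi ->
  poisson r (th - phi) <= \sum_(j < N.+1)
     (4 * K0 / ((2 ^+ j) ^+ 2 * (1 - r))) * \1_(Aset th (2 ^+ j * (1 - r))) phi.
Proof.
move=> K0p HP /andP[r0 r1] HN thI phiI.
have [t [tpi [ct tA]]] := cos_red thI phiI.
have -> : poisson r (th - phi) = poisson r t by rewrite /poisson ct.
have h0 : 0 < 1 - r by lra.
set h := 1 - r in h0 HN tA *.
have pi4 : pi < 4 :> R by have := @pihalf_lt2 R; lra.
have exP : exists n, `|t| < 2 ^+ n * h by exists N; lra.
case: (ex_minnP exP) => J PJ minJ.
have JN : (J < N.+1)%N by rewrite ltnS; apply: minJ; lra.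
have aJ0 : forall j : nat, 0 <= 4 * K0 / ((2 ^+ j) ^+ 2 * h).
  move=> j; apply: divr_ge0; first lra.
  by apply: mulr_ge0; [apply: sqr_ge0 | lra].
rewrite (bigD1 (Ordinal JN)) //=.
have -> : \1_(Aset th (2 ^+ J * h)) phi = 1 :> R.
  by rewrite indicE mem_set //; apply: tA => //; apply: mulr_gt0 => //; exact: exprn_gt0.
rewrite mulr1.
apply: (le_trans (HP r t _ tpi)); first by apply/andP; split; lra.
apply: (le_trans (y := 4 * K0 / ((2 ^+ J) ^+ 2 * h))); last first.
  by rewrite lerDl; apply: sumr_ge0 => j _; apply: mulr_ge0 => //.
rewrite -/h.
have t2 : 0 <= t ^+ 2 by exact: sqr_ge0.
case: J PJ minJ JN => [|j] PJ minJ JN.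
  rewrite expr0 expr1n mul1r.
  rewrite ler_pdivrMr; last nra.
  rewrite mulrAC ler_pdivlMr; last lra.
  have : 0 <= K0 * h * t ^+ 2 by apply: mulr_ge0; [apply: mulr_ge0|]; lra.
  nra.
have Pj : ~~ (`|t| < 2 ^+ j * h).
  by apply/negP => /minJ; rewrite ltnn.
rewrite -leNgt in Pj.
have p0 : 0 < (2 : R) ^+ j by exact: exprn_gt0.
have t3 : (2 ^+ j * h) ^+ 2 <= t ^+ 2.
  rewrite -(real_normK (num_real t)) ler_sqr // nnegrE; nra.
have -> : 4 * K0 / ((2 ^+ j.+1) ^+ 2 * h) = K0 * h / ((2 ^+ j * h) ^+ 2).
  rewrite [2 ^+ j.+1]exprS; field; apply/andP; split; apply: lt0r_neq0 => //.
rewrite ler_pM2l; last nra.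
rewrite lef_pV2 ?posrE; [nra|nra|].
by apply: exprn_gt0; apply: mulr_gt0.
Qed.

Lemma poisson_cont (R : realType) (r th : R) : 0 <= r < 1 ->
  continuous (fun phi => poisson r (th - phi)).
Proof.
move=> /andP[r0 r1] x; rewrite /poisson.
have pi0 := @pi_gt0 R.
apply: (@continuousM _ _ (fun=> 1 - r ^+ 2)
  (fun phi => (2 * pi * (1 - 2 * r * cos (th - phi) + r ^+ 2))^-1)).
  exact: cst_continuous.
apply: continuousV.
  have := cos_le1 (th - x); move=> hc.
  apply: lt0r_neq0; apply: mulr_gt0; first lra.
  nra.
apply: (@continuousM _ _ (fun=> 2 * pi) (fun phi => 1 - 2 * r * cos (th - phi) + r ^+ 2)).
  exact: cst_continuous.
apply: (@continuousD _ _ _ (fun phi => 1 - 2 * r * cos (th - phi)) (fun=> r ^+ 2)); last first.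
  exact: cst_continuous.
apply: (@continuousD _ _ _ (fun=> (1 : R)) (fun phi => - (2 * r * cos (th - phi)))).
  exact: cst_continuous.
apply: (@continuousN _ _ _ (fun phi => (2 * r * cos (th - phi)))).
apply: (@continuousM _ _ (fun=> 2 * r) (fun phi => cos (th - phi))).
  exact: cst_continuous.
apply: (@continuous_comp _ _ _ (fun phi => th - phi) cos).
  apply: (@continuousD _ _ _ (fun=> th) (fun phi => - phi)); first exact: cst_continuous.
  apply: (@continuousN _ _ _ id); exact: cvg_id.
exact: continuous_cos.
Qed.

Lemma fine_le_EFin (R : realType) (x : \bar R) (y : R) :
  (0 <= x)%E -> (x <= y%:E)%E -> fine x <= y.
Proof. by case: x => //= x' _; rewrite lee_fin. Qed.

Lemma geo_sum (R : realType) n :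
  \sum_(j < n) ((2:R) ^+ j)^-1 = 2 - 2 / 2 ^+ n.
Proof.
elim: n => [|n IH]; first by rewrite big_ord0 expr0 divr1 subrr.
rewrite big_ord_recr /= IH exprS.
have : (2:R) ^+ n != 0 by apply: lt0r_neq0; exact: exprn_gt0.
move: (2 ^+ n) => p p0; field; rewrite p0 /=; done.
Qed.

Lemma key (R : realType) (K0 : R)
  (mu : {measure set (measurableTypeR R) -> \bar R}) (th delta k : R) :
  0 < K0 ->
  (forall r t, 1/2 <= r < 1 -> `|t| <= pi ->
     poisson r t <= K0 * (1 - r) / ((1 - r) ^+ 2 + t ^+ 2)) ->
  0 <= th < 2 * pi ->
  (mu `[0%R, (2 * pi)%R[%classic < +oo)%E ->
  0 < delta -> delta <= 1 -> 0 <= k ->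
  (forall D, 0 < D < delta ->
     (marc mu (th - D) (th + D) <= (k * (10 * D * ln (1 / (10 * D))))%:E)%E) ->
  exists B : R, forall r, 1/2 <= r < 1 ->
     poisson_int mu r th <= 80 * K0 * k * ln (1 / (1 - r)) + B.
Proof.
move=> K0p HP thI muf d0 d1 k0 H.
have pi0 := @pi_gt0 R. have pi2 := @pi_ge2 R.
pose Dm : set R := `[0, 2 * pi[%classic.
have muf2 : (mu Dm < +oo)%E := muf.
have mD : measurable Dm by exact: measurable_itv.
set M := fine (mu Dm).
have MfinE : mu Dm = M%:E.
  by rewrite fineK // ge0_fin_numE //; exact: measure_ge0.
have M0 : 0 <= M by rewrite /M; apply: fine_ge0; exact: measure_ge0.
exists (8 * K0 * M / delta) => r /andP[r0 r1].
have h0 : 0 < 1 - r by lra.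
set h := 1 - r in h0 *.
have h12 : h <= 1 / 2 by rewrite /h; lra.
have [N HN] : exists N, 4 <= 2 ^+ N * h.
  have q : 0 <= 4 / h by apply: divr_ge0; lra.
  have := archi_boundP q; set n := Num.Def.archi_bound _ => hn.
  exists n.
  have : (n <= 2 ^ n)%N by apply: ltnW; exact: ltn_expl.
  rewrite -(ler_nat R) natrX => hn2.
  rewrite -ler_pdivrMr //; lra.
have L0 : 0 <= ln (1 / h) by apply: ln_ge0; rewrite ler_pdivlMr //; lra.
set L := ln (1 / h) in L0 *.
pose a := fun j : nat => 4 * K0 / ((2 ^+ j) ^+ 2 * h).
have a0 : forall j, 0 <= a j.
  move=> j; apply: divr_ge0; first lra.
  by apply: mulr_ge0; [apply: sqr_ge0 | lra].
pose b := 40 * K0 * k * L + 4 * K0 * M / delta.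
have b0 : 0 <= b.
  rewrite /b; apply: addr_ge0; first by apply: mulr_ge0 => //; apply: mulr_ge0 => //; lra.
  by apply: divr_ge0; [apply: mulr_ge0|]; lra.
have term : forall j : nat, ((a j)%:E * mu (Aset th (2 ^+ j * h) `&` Dm) <=
                           (b * ((2:R) ^+ j)^-1)%:E)%E.
  move=> j.
  have p1 : 1 <= (2:R) ^+ j by apply: exprn_ege1; lra.
  have mAj : measurable (Aset th (2 ^+ j * h)) by exact: Aset_meas.
  have sub : Aset th (2 ^+ j * h) `<=` Dm by move=> x [].
  rewrite setIidl //.
  have q0 : 0 < ((2:R) ^+ j)^-1 by rewrite invr_gt0; lra.
  have bq : 40 * K0 * k * L * ((2:R) ^+ j)^-1 <= b * ((2:R) ^+ j)^-1.
    rewrite ler_pM2r // /b lerDl; apply: divr_ge0; [apply: mulr_ge0|]; lra.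
  have bq2 : 4 * K0 * M / delta * ((2:R) ^+ j)^-1 <= b * ((2:R) ^+ j)^-1.
    rewrite ler_pM2r // /b lerDr; apply: mulr_ge0 => //; apply: mulr_ge0 => //; lra.
  rewrite /a; move: p1 q0 bq bq2 mAj sub; move: ((2:R) ^+ j) => p p1 q0 bq bq2 mAj sub.
  have Ap : 0 < p * h by apply: mulr_gt0; lra.
  have [small|big] := ltrP (p * h) delta.
    rewrite -Aset_marc //; last by apply/andP; split; lra.
    have HH : (marc mu (th - p * h) (th + p * h) <=
      (k * (10 * (p * h) * ln (1 / (10 * (p * h)))))%:E)%E.
      by apply: H; rewrite Ap small.
    have aj0 : 0 <= 4 * K0 / (p ^+ 2 * h).
      by apply: divr_ge0; [lra | apply: mulr_ge0; [apply: sqr_ge0|lra]].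
    apply: (le_trans (lee_wpmul2l _ HH)); first by rewrite lee_fin.
    rewrite -EFinM lee_fin.
    have lnb : ln (1 / (10 * (p * h))) <= L.
      rewrite /L ler_ln ?posrE; last 2 first.
      - by apply: divr_gt0 => //; lra.
      - by apply: divr_gt0 => //; nra.
      by rewrite ler_pdivrMr; [rewrite mulrAC mul1r ler_pdivlMr; nra | nra].
    have e : 4 * K0 / (p ^+ 2 * h) * (k * (10 * (p * h) * ln (1 / (10 * (p * h)))))
      = (40 * K0 * k * p^-1) * ln (1 / (10 * (p * h))).
      by field; apply/andP; split; apply: lt0r_neq0; lra.
    rewrite e; apply: le_trans bq.
    have c0 : 0 <= 40 * K0 * k * p^-1.
      apply: mulr_ge0; last lra; apply: mulr_ge0 => //; lra.
    apply: (le_trans (y := 40 * K0 * k * p^-1 * L)); first exact: ler_wpM2l.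
    by rewrite le_eqVlt; apply/orP; left; apply/eqP; ring.
  have aj0 : 0 <= 4 * K0 / (p ^+ 2 * h).
    by apply: divr_ge0; [lra | apply: mulr_ge0; [apply: sqr_ge0|lra]].
  have mu_le : (mu (Aset th (p * h)) <= M%:E)%E.
    by rewrite -MfinE; apply: le_measure => //; rewrite inE.
  apply: (le_trans (lee_wpmul2l _ mu_le)); first by rewrite lee_fin.
  rewrite -EFinM lee_fin; apply: le_trans bq2.
  have -> : 4 * K0 / (p ^+ 2 * h) * M = (4 * K0 * M) * (p ^+ 2 * h)^-1.
    by field; apply/andP; split; apply: lt0r_neq0; lra.
  have -> : 4 * K0 * M / delta * p^-1 = (4 * K0 * M) * (delta * p)^-1.
    by field; apply/andP; split; apply: lt0r_neq0; lra.
  apply: ler_wpM2l; first by apply: mulr_ge0; lra.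
  rewrite lef_pV2 ?posrE; [nra | nra | nra].
have Hint : (\int[mu]_(x in Dm) (poisson r (th - x))%:E <= (2 * b)%:E)%E.
  have rI : 0 <= r < 1 by apply/andP; split; lra.
  have mA : forall j : nat, measurable (Aset th (2 ^+ j * h)) by move=> j; exact: Aset_meas.
  apply: (@le_trans _ _ (\int[mu]_(x in Dm)
       (\sum_(j < N.+1) (a j * \1_(Aset th (2 ^+ j * h)) x)%:E))%E).
    apply: ge0_le_integral => //.
    - by move=> x _; rewrite lee_fin; apply: poisson_ge0.
    - apply/measurable_realfun.measurable_EFinP; apply: measurable_funTS.
      exact (measurable_realfun.continuous_measurable_fun (poisson_cont (th:=th) rI)).
    - apply: emeasurable_sum => j.
      apply/measurable_realfun.measurable_EFinP.
      apply: measurable_realfun.measurable_funM; first exact: measurable_cst.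
      exact (@measurable_realfun.measurable_indic _ (measurableTypeR R) R Dm _ (mA j)).
    - move=> x Dx; rewrite sumEFin lee_fin.
      move: Dx; rewrite /Dm /= in_itv /= => xI.
      apply: pw_bound => //; apply/andP; split; lra.
  rewrite ge0_integral_sum //; last 2 first.
  - move=> j; apply/measurable_realfun.measurable_EFinP.
    apply: measurable_realfun.measurable_funM; first exact: measurable_cst.
    exact (@measurable_realfun.measurable_indic _ (measurableTypeR R) R Dm _ (mA j)).
  - by move=> j x _; rewrite lee_fin; apply: mulr_ge0.
  apply: (@le_trans _ _ (\sum_(j < N.+1) (b * ((2:R) ^+ j)^-1)%:E)%E).
    apply: lee_sum => j _.
    under eq_integral do rewrite EFinM.
    rewrite ge0_integralZl_EFin //; last first.
      apply/measurable_realfun.measurable_EFinP.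
      exact (@measurable_realfun.measurable_indic _ (measurableTypeR R) R Dm _ (mA j)).
    by rewrite integral_indic //; exact (mA j).
  rewrite sumEFin lee_fin -mulr_sumr geo_sum.
  have : 0 <= 2 / (2:R) ^+ N.+1 by apply: divr_ge0 => //; apply: exprn_ge0.
  nra.
rewrite /poisson_int.
apply: (@le_trans _ _ (2 * b)); last by rewrite /b le_eqVlt; apply/orP; left; apply/eqP; field; apply: lt0r_neq0.
apply: fine_le_EFin => //.
by apply: integral_ge0 => x _; rewrite lee_fin; apply: poisson_ge0; apply/andP; split; lra.
Qed.

Lemma limsup_bound (R : realType) (f : R -> \bar R) (c z : R) : z < 1 ->
  (forall r, z < r < 1 -> (f r <= c%:E)%E) -> (limf_esup f (at_left 1) <= c%:E)%E.
Proof.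
move=> z1 H; rewrite limf_esupE; apply: ereal_inf_le.
have FV : (at_left (1:R)) [set r | z < r < 1].
  near=> r; apply/andP; split; near: r; [exact: nbhs_left_gt | exact: nbhs_left_lt].
exists (ereal_sup (f @` [set r | z < r < 1])); first by exists [set r | z < r < 1].
by apply: ub_ereal_sup => _ [r rV <-]; exact: H.
Unshelve. all: by end_near.
Qed.

Unset Implicit Arguments. Set Strict Implicit.

Theorem lemma12 (R : realType) (C : R) (n : nat) : (1 <= n)%N ->
  exists k : R, 0 < k /\
  forall mu : {measure set (measurableTypeR R) -> \bar R},
    circle_measure mu ->
    in_K (poisson_int mu) ->
    (forall a L : R, 0 < L <= 1 ->
       (marc mu a (a + L) <= (C * L * ln (expR 1 / L))%:E)%E) ->
    forall theta, Fset (poisson_int mu) n theta ->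
    exists Delta : nat -> R,
      (forall j, Delta j.+1 < Delta j) /\
      Delta @ \oo --> 0 /\
      (forall j, ((k * (10 * Delta j * ln (1 / (10 * Delta j))))%:E
                  <= marc mu (theta - Delta j) (theta + Delta j))%E).
Proof.
move=> n1.
have [K0 K0p HP] := poisson_ub R.
have n0 : (0 : R) < n%:R by rewrite ltr0n.
have k0 : 0 < 1 / (80 * K0 * n%:R).
  by apply: divr_gt0 => //; apply: mulr_gt0 => //; apply: mulr_gt0 => //; lra.
exists (1 / (80 * K0 * n%:R)); split => //.
set k := 1 / (80 * K0 * n%:R) in k0 *.
move=> mu [mu0 muf] _ _ th.
rewrite /Fset /= => -[thI Hlim].
have thI' : 0 <= th < 2 * pi by move: thI; rewrite inE /= in_itv.
pose good D := ((k * (10 * D * ln (1 / (10 * D))))%:E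
                  <= marc mu (th - D) (th + D))%E.
have Good : forall eps, 0 < eps -> exists D, 0 < D < eps /\ good D.
  move=> eps e0; apply: contrapT => Hn.
  have dm0 : 0 < Num.min eps 1 by rewrite lt_min e0 ltr01.
  have dm1 : Num.min eps 1 <= 1 by rewrite ge_min lexx orbT.
  have Hs : forall D, 0 < D < Num.min eps 1 ->
      (marc mu (th - D) (th + D) <= (k * (10 * D * ln (1 / (10 * D))))%:E)%E.
    move=> D /andP[D0 D1].
    have : ~~ good D.
      apply/negP => gD; apply: Hn; exists D; split => //; rewrite D0 /=.
      by apply: (lt_le_trans D1); rewrite ge_min lexx.
    by rewrite /good -ltNge => /ltW.
  have [B HB] := @key R K0 mu th (Num.min eps 1) k K0p HP thI' muf dm0 dm1 (ltW k0) Hs.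
  pose Lm := 2 * n%:R * `|B| + 1.
  have Lm0 : 0 < Lm by rewrite /Lm; have := normr_ge0 B; nra.
  have ex0 : 0 < expR (- Lm) := expR_gt0 _.
  have z1 : Num.max (1/2) (1 - expR (- Lm)) < 1 by rewrite gt_max; apply/andP; split; lra.
  have : (limf_esup (fun r : R => (poisson_int mu r th / `|ln (1 - r)|)%:E) (at_left 1)
            <= (3 / (2 * n%:R))%:E)%E.
    apply: (limsup_bound z1) => r /andP[zr r1]; rewrite lee_fin.
    move: zr; rewrite gt_max => /andP[r12 hr].
    have h0 : 0 < 1 - r by lra.
    have hl : 1 - r < expR (- Lm) by lra.
    have lnh : ln (1 - r) < - Lm by rewrite -ltr_expR lnK // posrE.
    have -> : `|ln (1 - r)| = - ln (1 - r) by rewrite ltr0_norm //; lra.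
    have rI : 1 / 2 <= r < 1 by apply/andP; split; lra.
    have Hu := HB r rI.
    rewrite [1 / (1 - r)]div1r lnV ?posrE // in Hu.
    rewrite ler_pdivrMr; last lra.
    have e80 : 80 * K0 * k = 1 / n%:R by rewrite /k; field; apply/andP; split; apply: lt0r_neq0.
    rewrite e80 in Hu.
    have cn : 1 / n%:R * n%:R = 1 :> R by field; apply: lt0r_neq0.
    have c0 : 0 < 1 / (n%:R : R) by apply: divr_gt0.
    have -> : 3 / (2 * n%:R) = 3 / 2 * (1 / (n%:R : R)) by field; apply: lt0r_neq0.
    have Bn := ler_norm B.
    move: (1 / (n%:R : R)) c0 cn Hu => c c0 cn Hu.
    rewrite /Lm in lnh.
    set l := - ln (1 - r) in Hu *.
    have l1 : 2 * n%:R * `|B| <= l by rewrite /l; lra.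
    have s1 : c * (2 * n%:R * `|B|) <= c * l by apply: ler_wpM2l; lra.
    have s2 : c * (2 * n%:R * `|B|) = 2 * `|B|.
      have -> : c * (2 * n%:R * `|B|) = 2 * `|B| * (c * n%:R) by ring.
      by rewrite cn mulr1.
    lra.
  move=> H2; have := le_trans Hlim H2; rewrite lee_fin.
  have -> : 3 / (2 * n%:R) = 3 / 2 * (1 / (n%:R : R)) by field; apply: lt0r_neq0.
  have -> : 2 / n%:R = 2 * (1 / (n%:R : R)) by field; apply: lt0r_neq0.
  have c0 : 0 < 1 / (n%:R : R) by apply: divr_gt0.
  lra.
have Good' : forall eps : R, exists D : R, 0 < eps -> 0 < D < eps /\ good D.
  move=> eps; have [e0|e0] := ltrP 0 eps.
    by have [D HD] := Good eps e0; exists D.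
  by exists 0.
have [g Hg] := choice Good'.
pose Delta := fix F (j : nat) : R :=
  match j with 0 => g 1 | j'.+1 => g (Num.min (F j') (j'.+2%:R)^-1) end.
have HD : forall j, 0 < Delta j < (j.+1%:R)^-1 /\ good (Delta j).
  elim => [|j [/andP[d0 d1] _]].
    by have [] := Hg 1 ltr01; rewrite invr1.
  have e0 : 0 < Num.min (Delta j) (j.+2%:R)^-1.
    by rewrite lt_min d0 invr_gt0 ltr0n.
  have [/andP[q0 q1] q2] := Hg _ e0.
  split => //; rewrite /= q0 /=.
  by apply: (lt_le_trans q1); rewrite ge_min lexx orbT.
exists Delta; split; [|split].
- move=> j; have [/andP[d0 d1] _] := HD j.
  have e0 : 0 < Num.min (Delta j) (j.+2%:R)^-1.
    by rewrite lt_min d0 invr_gt0 ltr0n.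
  have [/andP[q0 q1] _] := Hg _ e0.
  by apply: (lt_le_trans q1); rewrite ge_min lexx.
- apply: (@squeeze_cvgr _ _ _ _ (fun=> 0) harmonic).
  + apply: nearW => j; have [/andP[d0 d1] _] := HD j.
    by rewrite ltW //= ltW.
  + exact: cvg_cst.
  + exact: cvg_harmonic.
- by move=> j; have [_ ?] := HD j.
Qed.
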